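(* For every $d\ge 1$, no graph of the form $K_{d+1}\star G_3$ (with $G_3$ any graph on $3$ vertices) is $d$-ball packable.
   Context: $K_n$ is the complete graph on $n$ vertices, $G_3$ an arbitrary graph on $3$ vertices, $\star$ the graph join. A $d$-ball in $\hat{\mathbb R}^d$ is a closed ball, closed exterior of an open ball with $\infty$, or a closed half-space with $\infty$; a $d$-ball packing is a collection of $d$-balls with disjoint interiors; its tangency graph joins balls meeting in exactly one point; a graph is $d$-ball packable if isomorphic to the tangency graph of some $d$-ball packing. *)

(* Defs.v *)
From Stdlib Require Import Reals.
From mathcomp Require Import all_boot.
Local Open Scope R_scope.
Set Implicit Arguments. Unset Strict Implicit. Unset Printing Implicit Defensive.

Definition vec (d : nat) : Type := 'I_d -> R.

Definition dot (d : nat) (u v : vec d) : R :=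
  \big[Rplus/0]_(i < d) (Rmult (u i) (v i)).

Definition sqdist (d : nat) (u v : vec d) : R :=
  \big[Rplus/0]_(i < d) (Rmult (Rminus (u i) (v i)) (Rminus (u i) (v i))).

(* Points of the one-point compactification \hat R^d : None is infinity. *)
Definition hpoint (d : nat) : Type := option (vec d).

Inductive dball (d : nat) : Type :=
| BallIn  of vec d & R   (* closed ball, center c, radius r > 0 *)
| BallOut of vec d & R   (* closed exterior of the open ball B(c,r), r > 0, plus infinity *)
| HalfSp  of vec d & R.  (* closed half-space {x | a.x <= b}, a <> 0, plus infinity *)

Definition valid_ball (d : nat) (B : dball d) : Prop :=
  match B with
  | BallIn _ r => (0 < r)
  | BallOut _ r => (0 < r)
  | HalfSp a _ => a <> (fun _ => 0)
  end.

Definition in_ball (d : nat) (B : dball d) (p : hpoint d) : Prop :=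
  match B, p with
  | BallIn c r, Some x => (sqdist x c <= r * r)
  | BallIn _ _, None => False
  | BallOut c r, Some x => (r * r <= sqdist x c)
  | BallOut _ _, None => True
  | HalfSp a b, Some x => (dot a x <= b)
  | HalfSp _ _, None => True
  end.

(* Its interior in \hat R^d (infinity lies on the boundary of a
   half-space-with-infinity, but in the interior of an exterior ball). *)
Definition in_interior (d : nat) (B : dball d) (p : hpoint d) : Prop :=
  match B, p with
  | BallIn c r, Some x => (sqdist x c < r * r)
  | BallIn _ _, None => False
  | BallOut c r, Some x => (r * r < sqdist x c)
  | BallOut _ _, None => True
  | HalfSp a b, Some x => (dot a x < b)
  | HalfSp _ _, None => False
  end.

Definition tangent (d : nat) (B1 B2 : dball d) : Prop :=
  exists p, in_ball B1 p /\ in_ball B2 p /\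
    forall q, in_ball B1 q -> in_ball B2 q -> q = p.

(* Distinct
   vertices automatically get distinct balls, since interiors are nonempty,
   so this is exactly "isomorphic to the tangency graph of a packing". *)
Definition ball_packable (d : nat) (V : finType) (adj : rel V) : Prop :=
  exists B : V -> dball d,
    (forall v, valid_ball (B v)) /\
    (forall u v, u <> v -> forall p, ~ (in_interior (B u) p /\ in_interior (B v) p)) /\
    (forall u v, u <> v -> (adj u v <-> tangent (B u) (B v))).

Definition join_complete (n : nat) (V : finType) (e : rel V) : rel ('I_n + V)%type :=
  fun x y =>
    match x, y with
    | inl i, inl j => i != j
    | inl _, inr _ => true
    | inr _, inl _ => true
    | inr u, inr v => e u v
    end.
Arguments join_complete n {V} e x y.
Arguments ball_packable d {V} adj.

(* Main.v *)
Set Warnings "-notation-overridden,-ambiguous-paths".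
Require Import Defs.
From Stdlib Require Import Reals Lra Psatz FunctionalExtensionality.
From mathcomp Require Import all_boot all_algebra.
From mathcomp Require Import Rstruct.
Local Open Scope R_scope.
Set Implicit Arguments. Unset Strict Implicit.

Section Vec.
Variable d : nat.
Implicit Types u v w x z : vec d.

Definition vlin (p : R) u (q : R) w : vec d := fun i => p * u i + q * w i.

Lemma dot_linl p u q w z : dot (vlin p u q w) z = p * dot u z + q * dot w z.
Proof.
rewrite /dot /vlin.
rewrite (big_distrr p) (big_distrr q) -big_split /=.
apply: eq_bigr => i _; ring.
Qed.

Lemma dot_comm u w : dot u w = dot w u.
Proof. rewrite /dot; apply: eq_bigr => i _; ring. Qed.

Lemma dot_linr p u q w z : dot z (vlin p u q w) = p * dot z u + q * dot z w.
Proof. by rewrite dot_comm dot_linl (dot_comm u) (dot_comm w). Qed.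

Lemma dot_ge0 u : 0 <= dot u u.
Proof.
rewrite /dot; elim/big_ind: _ => //. lra. move=> a b; lra. move=> i _; nra.
Qed.

Lemma dot_eq0 u : dot u u = 0 -> forall i, u i = 0.
Proof.
move=> H i; apply: Rsqr_0_uniq; rewrite /Rsqr.
move: H; rewrite /dot (bigD1 i) //=.
set S := (X in _ + X = _).
have H1: 0 <= S.
  rewrite /S; elim/big_ind: _ => [|a b Ha Hb|j _]; [lra|lra|nra].
move=> H2. have H3 : 0 <= u i * u i by nra. lra.
Qed.

Lemma sqdistE x c : sqdist x c = dot x x - 2 * dot x c + dot c c.
Proof.
have -> : dot x x - 2 * dot x c + dot c c = dot (vlin 1 x (-1) c) (vlin 1 x (-1) c).
  rewrite dot_linl !dot_linr (dot_comm c x); ring.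
rewrite /sqdist /dot /vlin; apply: eq_bigr => i _; ring.
Qed.

Lemma dot_scalel k u z : dot (fun i => k * u i) z = k * dot u z.
Proof. rewrite /dot (big_distrr k) /=; apply: eq_bigr => i _; ring. Qed.

Lemma dot_scaler k u z : dot z (fun i => k * u i) = k * dot z u.
Proof. by rewrite dot_comm dot_scalel dot_comm. Qed.

Record LV := mkLV { la : R; lb : vec d; lc : R }.

Definition Lf (u w : LV) : R := dot (lb u) (lb w) - 2 * (la u * lc w + la w * lc u).
Definition eval (u : LV) x : R := la u * dot x x + dot (lb u) x + lc u.
Definition grad (u : LV) x : vec d := vlin (2 * la u) x 1 (lb u).

Lemma Lf_sym (u w : LV) : Lf u w = Lf w u.
Proof. rewrite /Lf dot_comm; ring. Qed.

Lemma eval_shift (u : LV) x t v :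
  eval u (vlin 1 x t v) = eval u x + t * dot (grad u x) v + t * t * la u * dot v v.
Proof.
rewrite /eval /grad !dot_linl !dot_linr (dot_comm v x) (dot_comm (lb u) x); ring.
Qed.

Lemma grad_dot (u w : LV) x :
  dot (grad u x) (grad w x) = Lf u w + 2 * la w * eval u x + 2 * la u * eval w x.
Proof.
rewrite /eval /grad /Lf !dot_linl !dot_linr (dot_comm (lb u) x) (dot_comm (lb w) x); ring.
Qed.

Definition phi (B : dball d) : LV :=
  match B with
  | BallIn c r => mkLV (/ (2 * r)) (fun i => (- / r) * c i) ((dot c c - r * r) / (2 * r))
  | BallOut c r => mkLV (- / (2 * r)) (fun i => (/ r) * c i) (- ((dot c c - r * r) / (2 * r)))
  | HalfSp a b => mkLV 0 (fun i => (/ sqrt (dot a a)) * a i) (- b / sqrt (dot a a))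
  end.

Lemma dot_pos (a : vec d) : a <> (fun _ => 0) -> 0 < dot a a.
Proof.
move=> Ha; have H0 := dot_ge0 a.
case: (Req_dec (dot a a) 0) => H; last lra.
exfalso; apply: Ha; apply: functional_extensionality => i; exact: dot_eq0.
Qed.

Lemma eval_phi B x : valid_ball B ->
  (in_ball B (Some x) <-> eval (phi B) x <= 0) /\
  (in_interior B (Some x) <-> eval (phi B) x < 0).
Proof.
case: B => [c r|c r|a b] /= Hv; rewrite /eval /=.
- rewrite dot_scalel sqdistE (dot_comm c x).
  have E : / (2 * r) * dot x x + - / r * dot x c + (dot c c - r * r) / (2 * r)
     = (dot x x - 2 * dot x c + dot c c - r * r) * / (2 * r) by field; lra.
  rewrite E; have Hi : 0 < / (2 * r) by apply: Rinv_0_lt_compat; lra.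
  split; split; move=> H; nra.
- rewrite dot_scalel sqdistE (dot_comm c x).
  have E : - / (2 * r) * dot x x + / r * dot x c + - ((dot c c - r * r) / (2 * r))
     = - (dot x x - 2 * dot x c + dot c c - r * r) * / (2 * r) by field; lra.
  rewrite E; have Hi : 0 < / (2 * r) by apply: Rinv_0_lt_compat; lra.
  split; split; move=> H; nra.
- rewrite dot_scalel.
  have Hs : 0 < sqrt (dot a a) by apply: sqrt_lt_R0; exact: dot_pos.
  have E : 0 * dot x x + / sqrt (dot a a) * dot a x + - b / sqrt (dot a a)
     = (dot a x - b) * / sqrt (dot a a) by field; lra.
  rewrite E; have Hi : 0 < / sqrt (dot a a) by apply: Rinv_0_lt_compat.
  split; split; move=> H; nra.
Qed.

Lemma phi_norm B : valid_ball B -> Lf (phi B) (phi B) = 1.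
Proof.
case: B => [c r|c r|a b] /= Hv; rewrite /Lf /= dot_scalel dot_scaler.
- field; lra.
- field; lra.
- have Hp := dot_pos Hv.
  have Hs : 0 < sqrt (dot a a) by apply: sqrt_lt_R0.
  have Hss := sqrt_sqrt (dot a a) (Rlt_le _ _ Hp).
  set s := sqrt (dot a a) in Hs Hss *. rewrite -Hss. field. lra.
Qed.

Definition NI (u w : LV) := forall y, ~ (eval u y < 0 /\ eval w y < 0).

Lemma NI_sym (u w : LV) : NI u w -> NI w u.
Proof. move=> H y [H1 H2]; exact: (H y). Qed.

Definition zv : vec d := fun _ => 0.

Lemma dot_zv z : dot zv z = 0.
Proof. rewrite /dot big1 // => i _; rewrite /zv; ring. Qed.

Lemma eval_zv (u : LV) t v :
  eval u (vlin 1 zv t v) = lc u + t * dot (lb u) v + t * t * la u * dot v v.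
Proof.
rewrite eval_shift /eval /grad dot_linl !dot_zv (dot_comm (lb u) zv) dot_zv; ring.
Qed.

End Vec.

Lemma small_neg a b c : (a < 0 \/ (a = 0 /\ b < 0)) ->
  exists del, 0 < del /\ forall t, 0 < t <= del -> a + t * b + t * t * c < 0.
Proof.
case=> [Ha|[Ha Hb]].
- exists (Rmin 1 (- a / (Rabs b + Rabs c + 1))).
  have Hq : 0 < - a / (Rabs b + Rabs c + 1).
    apply: Rdiv_lt_0_compat; [lra|]. have := Rabs_pos b; have := Rabs_pos c; lra.
  split; first by apply: Rmin_glb_lt; lra.
  move=> t [Ht1 Ht2].
  have Ht3 : t <= 1 by apply: Rle_trans Ht2 (Rmin_l _ _).
  have Ht4 : t <= - a / (Rabs b + Rabs c + 1) by apply: Rle_trans Ht2 (Rmin_r _ _).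
  have Hbc : 0 < Rabs b + Rabs c + 1 by have := Rabs_pos b; have := Rabs_pos c; lra.
  have Ht5 : t * (Rabs b + Rabs c + 1) <= - a.
    have -> : - a = (- a / (Rabs b + Rabs c + 1)) * (Rabs b + Rabs c + 1) by field; lra.
    nra.
  have H1 : t * b <= t * Rabs b by have := Rle_abs b; nra.
  have H2 : t * t * c <= t * Rabs c.
    have h1 := Rle_abs c; have h2 := Rabs_pos c.
    have h0 : 0 <= t * t by nra.
    have h3 : t * t * c <= t * t * Rabs c by apply: Rmult_le_compat_l.
    have h4 : t * t * Rabs c <= t * Rabs c.
      have -> : t * Rabs c = t * 1 * Rabs c by ring.
      apply: Rmult_le_compat_r => //; apply: Rmult_le_compat_l; lra.
    lra.
  nra.
- exists (- b / (2 * (Rabs c + 1))).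
  have Hc : 0 < Rabs c + 1 by have := Rabs_pos c; lra.
  split; first by apply: Rdiv_lt_0_compat; lra.
  move=> t [Ht1 Ht2].
  have Ht5 : t * (2 * (Rabs c + 1)) <= - b.
    have -> : - b = (- b / (2 * (Rabs c + 1))) * (2 * (Rabs c + 1)) by field; lra.
    nra.
  have H2 : t * c <= t * Rabs c by have := Rle_abs c; nra.
  rewrite Ha. nra.
Qed.

Lemma large_neg a b c : (c < 0 \/ (c = 0 /\ b < 0)) ->
  exists T, 0 < T /\ forall t, T <= t -> a + t * b + t * t * c < 0.
Proof.
case=> [Hc|[Hc Hb]].
- exists ((Rabs a + Rabs b + 1) / (- c) + 1).
  have Hq : 0 < (Rabs a + Rabs b + 1) / (- c).
    apply: Rdiv_lt_0_compat; [|lra]. have := Rabs_pos b; have := Rabs_pos a; lra.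
  split; first lra.
  move=> t Ht.
  have E : (Rabs a + Rabs b + 1) = ((Rabs a + Rabs b + 1) / (- c)) * (- c) by field; lra.
  have Hct : t * c <= - (Rabs a + Rabs b + 1) by nra.
  have := Rle_abs a; have := Rle_abs b; have := Rle_abs (-b); rewrite Rabs_Ropp => h1 h2 h3.
  have Hbt : b + t * c <= - Rabs a - 1 by lra.
  have Ht1 : 1 <= t by lra.
  have Hr : a + t * b + t * t * c = a + t * (b + t * c) by ring.
  rewrite Hr. have := Rabs_pos a. nra.
- exists ((Rabs a + 1) / (- b)).
  have Hq : 0 < (Rabs a + 1) / (- b).
    apply: Rdiv_lt_0_compat; [|lra]. have := Rabs_pos a; lra.
  split; first lra.
  move=> t Ht.
  have E : (Rabs a + 1) = ((Rabs a + 1) / (- b)) * (- b) by field; lra.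
  have Hbt : t * b <= - (Rabs a + 1) by nra.
  have := Rle_abs a. rewrite Hc. nra.
Qed.

Section Geo.
Variable d : nat.
Notation LV := (LV d).

Lemma key_small (u w : LV) x v :
  eval u x <= 0 -> eval w x <= 0 ->
  (eval u x < 0 \/ dot (grad u x) v < 0) ->
  (eval w x < 0 \/ dot (grad w x) v < 0) -> ~ NI u w.
Proof.
move=> Hu Hw Cu Cw HN.
have [d1 [Hd1 H1]] : exists del, 0 < del /\ forall t, 0 < t <= del ->
   eval u x + t * dot (grad u x) v + t * t * (la u * dot v v) < 0.
  apply: small_neg; case: Cu; [left|]; first done. move=> h.
  case: (Rle_lt_or_eq_dec _ _ Hu) => h'; [left|right]; done.
have [d2 [Hd2 H2]] : exists del, 0 < del /\ forall t, 0 < t <= del ->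
   eval w x + t * dot (grad w x) v + t * t * (la w * dot v v) < 0.
  apply: small_neg; case: Cw; [left|]; first done. move=> h.
  case: (Rle_lt_or_eq_dec _ _ Hw) => h'; [left|right]; done.
set t := Rmin d1 d2.
have Ht : 0 < t <= d1 by split; [apply: Rmin_glb_lt|apply: Rmin_l].
have Ht' : 0 < t <= d2 by split; [apply: Rmin_glb_lt|apply: Rmin_r].
apply: (HN (vlin 1 x t v)); rewrite !eval_shift; split.
- have := H1 t Ht; lra.
- have := H2 t Ht'; lra.
Qed.

Lemma key_large (u w : LV) v :
  (la u * dot v v < 0 \/ (la u * dot v v = 0 /\ dot (lb u) v < 0)) ->
  (la w * dot v v < 0 \/ (la w * dot v v = 0 /\ dot (lb w) v < 0)) -> ~ NI u w.
Proof.
move=> Cu Cw HN.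
have [T1 [HT1 H1]] := large_neg (lc u) Cu.
have [T2 [HT2 H2]] := large_neg (lc w) Cw.
set t := Rmax T1 T2.
apply: (HN (vlin 1 (@zv d) t v)); rewrite !eval_zv; split.
- have := H1 t (Rmax_l _ _); lra.
- have := H2 t (Rmax_r _ _); lra.
Qed.

Lemma cs_lower (g1 g2 : vec d) : dot g1 g1 = 1 -> dot g2 g2 = 1 -> -1 <= dot g1 g2.
Proof.
move=> H1 H2; have := dot_ge0 (vlin 1 g1 1 g2).
rewrite dot_linl !dot_linr (dot_comm g2 g1); lra.
Qed.

Lemma finite_tangent (u w : LV) x : Lf u u = 1 -> Lf w w = 1 -> NI u w ->
  eval u x <= 0 -> eval w x <= 0 -> Lf u w = -1.
Proof.
move=> Nu Nw HN Hu Hw.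
have step1 : forall (p q : LV), Lf p p = 1 -> Lf q q = 1 -> NI p q ->
    eval p x <= 0 -> eval q x <= 0 -> eval p x = 0.
  move=> p q Np Nq HNpq Hp Hq.
  case: (Rle_lt_or_eq_dec _ _ Hp) => // hp; exfalso.
  case: (Rle_lt_or_eq_dec _ _ Hq) => hq.
    by apply: (HNpq x).
  apply: (key_small (v := vlin (-1) (grad q x) 0 (grad q x)) Hp Hq); [by left|right|done].
  rewrite dot_linr grad_dot hq Nq; lra.
have Eu := step1 u w Nu Nw HN Hu Hw.
have Ew := step1 w u Nw Nu (NI_sym HN) Hw Hu.
have G1 : dot (grad u x) (grad u x) = 1 by rewrite grad_dot Eu Nu; ring.
have G2 : dot (grad w x) (grad w x) = 1 by rewrite grad_dot Ew Nw; ring.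
have G12 : dot (grad u x) (grad w x) = Lf u w by rewrite grad_dot Eu Ew; ring.
have := cs_lower G1 G2; rewrite G12 => Hl.
case: (Rle_lt_or_eq_dec _ _ Hl) => // hl; exfalso.
apply: (key_small (v := vlin (-1) (grad u x) (-1) (grad w x)) Hu Hw); [right|right|done].
- rewrite dot_linr G1 G12; lra.
- rewrite dot_linr (dot_comm (grad w x) (grad u x)) G2 G12; lra.
Qed.

Lemma inf_LV (u w : LV) : Lf u u = 1 -> Lf w w = 1 -> NI u w ->
  la u <= 0 -> la w = 0 -> Lf u w = -1.
Proof.
move=> Nu Nw HN Hu Hw.
have Bw : dot (lb w) (lb w) = 1 by move: Nw; rewrite /Lf Hw; lra.
case: (Rle_lt_or_eq_dec _ _ Hu) => hu.
- exfalso; apply: (key_large (v := vlin (-1) (lb w) 0 (lb w)) _ _ HN).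
  + left. rewrite dot_linl !dot_linr. nra.
  + right; split; [rewrite Hw; ring| rewrite dot_linr Bw; lra].
- have Bu : dot (lb u) (lb u) = 1 by move: Nu; rewrite /Lf hu; lra.
  have E : Lf u w = dot (lb u) (lb w) by rewrite /Lf hu Hw; ring.
  rewrite E; have Hl := cs_lower Bu Bw.
  case: (Rle_lt_or_eq_dec _ _ Hl) => // hl; exfalso.
  apply: (key_large (v := vlin (-1) (lb u) (-1) (lb w)) _ _ HN).
  + right; split; [rewrite hu; ring| rewrite dot_linr Bu; lra].
  + right; split; [rewrite Hw; ring| rewrite dot_linr Bw (dot_comm (lb w) (lb u)); lra].
Qed.
End Geo.

Section Mx.
Variable d : nat.
Notation LV := (LV d).

Definition enc (u : LV) : 'rV[R]_(d + 2) :=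
  \row_k match split k with
         | inl i => lb u i
         | inr j => if (val j == 0)%N then la u else lc u end.
Definition encd (u : LV) : 'rV[R]_(d + 2) :=
  \row_k match split k with
         | inl i => lb u i
         | inr j => if (val j == 0)%N then -2 * lc u else -2 * la u end.

Lemma LfE (u w : LV) : Lf u w = \big[Rplus/0]_(k < d + 2) (enc u ord0 k * encd w ord0 k).
Proof.
rewrite (big_split_ord Rplus) /=.
rewrite (@eq_bigr _ _ _ _ _ _ _ (fun i => lb u i * lb w i)); last first.
  move=> i _; rewrite !mxE.
  by rewrite (_ : split (lshift 2 i) = inl i) //; exact: (unsplitK (inl i)).
rewrite (@eq_bigr _ _ _ _ _ _ _ (fun j : 'I_2 => if (val j == 0)%N then la u * (-2 * lc w) else lc u * (-2 * la w))); last first.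
  move=> j _; rewrite !mxE.
  rewrite (_ : split (rshift d j) = inr j); last exact: (unsplitK (inr j)).
  by case: (val j == 0)%N.
rewrite !big_ord_recl big_ord0 /=.
rewrite /Lf /dot.
have H : forall A a b c e : R, A - 2*(a*b + c*e) = A + (a*(-2*b) + (e*(-2*c) + 0)) by move=> *; ring.
apply: H.
Qed.
Section MxAlg.
Local Open Scope ring_scope.
Import GRing.Theory Num.Theory.

Lemma const_mul (m n p : nat) (a b : R) :
  (const_mx a : 'M_(m, n)) *m (const_mx b : 'M_(n, p)) = const_mx (a * b *+ n).
Proof.
apply/matrixP => i j; rewrite !mxE.
under eq_bigr do rewrite !mxE.
by rewrite sumr_const card_ord.
Qed.

Lemma Qinv (hd : (0 < d)%N) :
  ((2%:M - const_mx 1) : 'M[R]_(d + 2)) *m (2^-1%:M - const_mx (2^-1 / d%:R)) = 1%:M.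
Proof.
rewrite mulmxBl !mulmxBr const_mul mul_scalar_mx mul_mx_scalar mul_scalar_mx.
have hd' : (d%:R : R) != 0 by rewrite pnatr_eq0 -lt0n.
have h2 : (2%:R : R) != 0 by rewrite pnatr_eq0.
apply/matrixP => i j; rewrite !mxE.
case: (i == j) => /=.
- rewrite mulr1n -[_ *+ (d + 2)]mulr_natr natrD -!INRE -!RmultE -!RinvE -!RminusE -!RplusE -?R1E.
  have hd'' : INR d <> 0%R by move=> h; move: hd'; rewrite -INRE h eqxx.
  change (INR 2) with (IZR 2).
  change (INR 1) with (IZR 1).
  field; exact: hd''.
- rewrite mulr0n mulr0 sub0r -[_ *+ (d + 2)]mulr_natr natrD -!INRE -!RmultE -!RinvE -!RminusE -!RplusE -!RoppE -?R1E.
  have hd'' : INR d <> 0%R by move=> h; move: hd'; rewrite -INRE h eqxx.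
  change (INR 2) with (IZR 2).
  change (INR 0) with (IZR 0). 
  field; exact: hd''.
Qed.

Lemma ortho (hd : (0 < d)%N) (r : 'I_(d + 2) -> LV)
  (H1 : forall k, Lf (r k) (r k) = 1)
  (H2 : forall k l, k != l -> Lf (r k) (r l) = -1)
  (v : LV) (Hv : forall k, Lf v (r k) = 0) : enc v = 0.
Proof.
set P : 'M[R]_(d + 2) := \matrix_(k, c) enc (r k) ord0 c.
set Pd : 'M[R]_(d + 2) := \matrix_(k, c) encd (r k) ord0 c.
have HQ : P *m Pd^T = 2%:M - const_mx 1.
  apply/matrixP => k l; rewrite !mxE.
  transitivity (Lf (r k) (r l)).
    by rewrite LfE; apply: eq_bigr => c _; rewrite !mxE.
  case: (eqVneq k l) => [->|hkl].
    by rewrite H1 mulr1n mulr2n addrK.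
  by rewrite H2 // mulr0n sub0r.
have HU : Pd^T \in unitmx.
  have := Qinv hd; rewrite -HQ -mulmxA => /mulmx1_unit [_].
  by rewrite unitmx_mul => /andP[].
have H0 : enc v *m Pd^T = 0.
  apply/matrixP => i k; rewrite !mxE (ord1 i).
  transitivity (Lf v (r k)).
    by rewrite LfE; apply: eq_bigr => c _; rewrite !mxE.
  by rewrite Hv.
by rewrite -(mulmxK HU (enc v)) H0 mul0mx.
Qed.

Lemma enc0 (v : LV) : enc v = 0 -> la v = 0 /\ lc v = 0 /\ forall i, lb v i = 0.
Proof.
move=> H.
have E : forall k, enc v ord0 k = 0 by move=> k; rewrite H mxE.
split; [|split].
- have := E (rshift d (ord0 : 'I_2)); rewrite mxE.
  by rewrite (_ : split (rshift d (ord0 : 'I_2)) = inr ord0) //; exact: (unsplitK (inr _)).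
- have := E (rshift d (ord_max : 'I_2)); rewrite mxE.
  by rewrite (_ : split (rshift d (ord_max : 'I_2)) = inr ord_max) //; exact: (unsplitK (inr _)).
- move=> i; have := E (lshift 2 i); rewrite mxE.
  by rewrite (_ : split (lshift 2 i) = inl i) //; exact: (unsplitK (inl _)).
Qed.
End MxAlg.
End Mx.

Section Final.
Variable d : nat.
Notation LV := (LV d).

Lemma tangent_L (B1 B2 : dball d) : valid_ball B1 -> valid_ball B2 ->
  (forall p, ~ (in_interior B1 p /\ in_interior B2 p)) -> tangent B1 B2 ->
  Lf (phi B1) (phi B2) = -1.
Proof.
move=> V1 V2 Hd [p [Hp1 [Hp2 _]]].
have N1 := phi_norm V1; have N2 := phi_norm V2.
have HN : NI (phi B1) (phi B2).
  move=> y [h1 h2]; apply: (Hd (Some y)); split.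
  - by apply/(proj2 (eval_phi y V1)).
  - by apply/(proj2 (eval_phi y V2)).
case: p Hp1 Hp2 => [x|] Hp1 Hp2.
  apply: (finite_tangent N1 N2 HN).
  - by apply/(proj1 (eval_phi x V1)).
  - by apply/(proj1 (eval_phi x V2)).
have Hdi := Hd None. clear Hd.
case: B1 V1 Hp1 Hdi N1 N2 HN => [c1 r1|c1 r1|a1 b1] V1 Hp1 Hdi N1 N2 HN //;
case: B2 V2 Hp2 Hdi N1 N2 HN => [c2 r2|c2 r2|a2 b2] V2 Hp2 Hdi N1 N2 HN //.
- by exfalso; apply: Hdi.
- apply: (inf_LV N1 N2 HN) => //=.
  have : 0 < / (2 * r1) by apply: Rinv_0_lt_compat; simpl in V1; lra.
  lra.
- rewrite Lf_sym; apply: (inf_LV N2 N1 (NI_sym HN)) => //=.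
  have : 0 < / (2 * r2) by apply: Rinv_0_lt_compat; simpl in V2; lra.
  lra.
- apply: (inf_LV N1 N2 HN) => //=; lra.
Qed.

Lemma exists_neg (u : LV) (i0 : 'I_d) : Lf u u = 1 -> exists y, eval u y < 0.
Proof.
move=> Nu.
case: (Rtotal_order (la u) 0) => [h|[h|h]].
- set e0 : vec d := fun i => if i == i0 then 1 else 0.
  have He : dot e0 e0 = 1.
    rewrite /dot (bigD1 i0) //= big1 /e0 ?eqxx; first ring.
    by move=> j /negbTE ->; ring.
  have Hc : la u * dot e0 e0 < 0 by rewrite He; lra.
  have [T [HT H]] := @large_neg (lc u) (dot (lb u) e0) (la u * dot e0 e0) (or_introl Hc).
  exists (vlin 1 (@zv d) T e0); rewrite eval_zv.
  have := H T (Rle_refl _); lra.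
- have Bu : dot (lb u) (lb u) = 1 by move: Nu; rewrite /Lf h; lra.
  set v := vlin (-1) (lb u) 0 (lb u).
  have Hb : dot (lb u) v = -1 by rewrite /v dot_linr Bu; ring.
  have Hc : la u * dot v v = 0 by rewrite h; ring.
  have Hb' : dot (lb u) v < 0 by lra.
  have [T [HT H]] := @large_neg (lc u) (dot (lb u) v) (la u * dot v v) (or_intror (conj Hc Hb')).
  exists (vlin 1 (@zv d) T v); rewrite eval_zv.
  have := H T (Rle_refl _); lra.
- set B := dot (lb u) (lb u).
  exists (vlin 1 (@zv d) (- / (2 * la u)) (lb u)); rewrite eval_zv -/B.
  have E1 : B - 4 * (la u * lc u) = 1 by move: Nu; rewrite /Lf -/B; lra.
  have Ht : - / (2 * la u) * la u = - / 2 by field; lra.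
  set t := - / (2 * la u) in Ht *.
  have -> : lc u + t * B + t * t * la u * B = lc u + t * B / 2.
    rewrite (_ : t * t * la u * B = t * (t * la u) * B); last ring.
    rewrite Ht; field.
  have : la u * (lc u + t * B / 2) = - / 4.
    rewrite (_ : la u * (lc u + t * B / 2) = la u * lc u + (t * la u) * B / 2); last field.
    rewrite Ht. have -> : la u * lc u = (B - 1) / 4 by lra. field.
  move=> H4.
  have H5 : 0 < / 4 by apply: Rinv_0_lt_compat; lra.
  nra.
Qed.

Definition lvlin (p : R) (u : LV) (q : R) (w : LV) : LV :=
  mkLV (p * la u + q * la w) (vlin p (lb u) q (lb w)) (p * lc u + q * lc w).

Lemma Lf_linl p (u : LV) q w z : Lf (lvlin p u q w) z = p * Lf u z + q * Lf w z.
Proof. rewrite /Lf /= dot_linl; ring. Qed.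

Definition is0 (v : LV) := la v = 0 /\ lc v = 0 /\ forall i, lb v i = 0.
Definition same (u w : LV) := la u = la w /\ lc u = lc w /\ forall i, lb u i = lb w i.

Lemma Lf_is0 (v z : LV) : is0 v -> Lf v z = 0.
Proof.
move=> [h1 [h2 h3]]; rewrite /Lf h1 h2 /dot big1; first ring.
by move=> i _; rewrite h3; ring.
Qed.

Lemma eval_same (u w : LV) x : same u w -> eval u x = eval w x.
Proof.
move=> [h1 [h2 h3]]; rewrite /eval h1 h2 /dot.
congr (_ + _ + _); apply: eq_bigr => i _; by rewrite h3.
Qed.

Lemma lin_same c (u w : LV) : c <> 0 -> is0 (lvlin c u (- c) w) -> same u w.
Proof.
move=> hc [h1 [h2 h3]]; rewrite /= in h1 h2 h3.
split; [|split].
- apply: (Rmult_eq_reg_l c) => //; lra.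
- apply: (Rmult_eq_reg_l c) => //; lra.
- move=> i; have := h3 i; rewrite /vlin => h.
  apply: (Rmult_eq_reg_l c) => //; lra.
Qed.

Lemma zero_test (hd : (0 < d)%N) (b : 'I_d.+1 -> LV) (X0 : LV)
  (Hb1 : forall i, Lf (b i) (b i) = 1) (Hb2 : forall i j, i != j -> Lf (b i) (b j) = -1)
  (HX1 : Lf X0 X0 = 1) (HX2 : forall i, Lf (b i) X0 = -1)
  (v : LV) : (forall i, Lf v (b i) = 0) -> Lf v X0 = 0 -> is0 v.
Proof.
move=> Hv1 Hv2.
pose r : 'I_(d + 2) -> LV := fun k => if (k < d.+1)%N then b (inord k) else X0.
apply: enc0; apply: (ortho hd (r := r)).
- move=> k; rewrite /r; case: ifP => _; [exact: Hb1|exact: HX1].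
- move=> k l kl; rewrite /r.
  case: ifP => hk; case: ifP => hl.
  + apply: Hb2; apply: contra kl => /eqP h; apply/eqP/val_inj.
    by have := congr1 (@nat_of_ord _) h; rewrite !inordK ?hk ?hl.
  + exact: HX2.
  + by rewrite Lf_sym; exact: HX2.
  + exfalso; move: kl; suff -> : k = l by rewrite eqxx.
    apply/val_inj.
    have h1 : (k <= d.+1)%N by rewrite -ltnS; apply: leq_trans (ltn_ord k) _; rewrite addn2.
    have h2 : (l <= d.+1)%N by rewrite -ltnS; apply: leq_trans (ltn_ord l) _; rewrite addn2.
    move: hk hl => /negbT h3 /negbT h4.
    rewrite -leqNgt in h3; rewrite -leqNgt in h4.
    by apply/eqP; rewrite eqn_leq (leq_trans h1 h4) (leq_trans h2 h3).
- move=> k; rewrite /r; case: ifP => _; [exact: Hv1|exact: Hv2].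
Qed.

Lemma pigeon (hd : (0 < d)%N) (b : 'I_d.+1 -> LV) (X : 'I_3 -> LV)
  (Hb1 : forall i, Lf (b i) (b i) = 1) (Hb2 : forall i j, i != j -> Lf (b i) (b j) = -1)
  (HX1 : forall j, Lf (X j) (X j) = 1) (HX2 : forall i j, Lf (b i) (X j) = -1) :
  exists j1 j2, j1 != j2 /\ same (X j1) (X j2).
Proof.
set X0 := X ord0. set X1 := X (inord 1). set X2 := X (inord 2).
have ZT := zero_test hd Hb1 Hb2 (HX1 ord0) (fun i => HX2 i ord0).
set D := lvlin 1 X1 (- (1)) X0.
set E := lvlin 1 X2 (- (1)) X0.
have HDb : forall i, Lf D (b i) = 0.
  by move=> i; rewrite Lf_linl !(Lf_sym _ (b i)) !HX2; ring.
have HEb : forall i, Lf E (b i) = 0.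
  by move=> i; rewrite Lf_linl !(Lf_sym _ (b i)) !HX2; ring.
have LDD : Lf D D = -2 * Lf D X0.
  rewrite {1}/D Lf_linl (Lf_sym X1 D) (Lf_sym X0 D) !Lf_linl (HX1 ord0) (HX1 (inord 1)) (Lf_sym X0 X1); ring.
have LEE : Lf E E = -2 * Lf E X0.
  rewrite {1}/E Lf_linl (Lf_sym X2 E) (Lf_sym X0 E) !Lf_linl (HX1 ord0) (HX1 (inord 2)) (Lf_sym X0 X2); ring.
have n10 : (inord 1 : 'I_3) != ord0 by apply/eqP => h; have := congr1 (@nat_of_ord _) h; rewrite inordK.
have n20 : (inord 2 : 'I_3) != ord0 by apply/eqP => h; have := congr1 (@nat_of_ord _) h; rewrite inordK.
have n12 : (inord 1 : 'I_3) != inord 2 by apply/eqP => h; have := congr1 (@nat_of_ord _) h; rewrite !inordK.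
set p := Lf D X0. set q := Lf E X0.
case: (Req_dec p 0) => hp.
  exists (inord 1), ord0; split => //.
  apply: (@lin_same 1); first lra.
  apply: ZT; [exact: HDb|exact: hp].
case: (Req_dec q 0) => hq.
  exists (inord 2), ord0; split => //.
  apply: (@lin_same 1); first lra.
  apply: ZT; [exact: HEb|exact: hq].
set v := lvlin q D (- p) E.
have Hv : is0 v.
  apply: ZT.
  - by move=> i; rewrite Lf_linl HDb HEb; ring.
  - rewrite Lf_linl -/p -/q; ring.
have e1 := Lf_is0 D Hv; have e2 := Lf_is0 E Hv.
rewrite /v Lf_linl LDD in e1. rewrite /v Lf_linl LEE (Lf_sym D E) in e2.
change (Lf D X0) with p in e1; change (Lf E X0) with q in e2.
set L := Lf E D in e1 e2.
have hpq : p = q.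
  case: (Req_dec L 0) => hL.
    rewrite hL in e1; exfalso.
    have : p * q = 0 by nra.
    case/Rmult_integral; lra.
  apply: (Rmult_eq_reg_r L) => //; nra.
exists (inord 1), (inord 2); split => //.
have SDE : same D E.
  apply: (@lin_same q) => //. by rewrite -{2}hpq.
move: SDE => [h1 [h2 h3]]; rewrite /= in h1 h2 h3.
rewrite /same -/X1 -/X2.
split; [lra|split; [lra|]].
move=> i; have := h3 i; rewrite /vlin; lra.
Qed.
End Final.

Local Close Scope R_scope.

Theorem corollary3p5 (d : nat) (hd : 1 <= d) (e : rel 'I_3)
  (e_sym : symmetric e) (e_irr : irreflexive e) :
  ~ ball_packable d (join_complete d.+1 e).
Proof.
move=> [B [Hv [Hdisj Htan]]].
pose b i := phi (B (inl i)). pose X j := phi (B (inr j)).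
have Hl : forall i j, i != j -> Lf (b i) (b j) = Ropp (IZR 1).
  move=> i j ij; apply: tangent_L; [exact: Hv|exact: Hv| |].
  - apply: Hdisj => -[h]; move: ij; rewrite h eqxx //.
  - apply/(Htan (inl i) (inl j) _).1 => //=.
    move=> -[h]; move: ij; rewrite h eqxx //.
have Hm : forall i j, Lf (b i) (X j) = Ropp (IZR 1).
  move=> i j; apply: tangent_L; [exact: Hv|exact: Hv| |].
  - by apply: Hdisj.
  - by apply/(Htan (inl i) (inr j) _).1.
have [j1 [j2 [hj Hs]]] := @pigeon d hd b X (fun i => phi_norm (Hv _)) Hl
   (fun j => phi_norm (Hv _)) Hm.
have [y Hy] := exists_neg (Ordinal hd) (phi_norm (Hv (inr j1))).
have Hy2 : Rlt (eval (X j2) y) (IZR 0).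
  by rewrite -(eval_same y Hs).
apply: (Hdisj (inr j1) (inr j2)).
- by move=> -[h]; move: hj; rewrite h eqxx.
- split.
  + by apply/(proj2 (eval_phi y (Hv (inr j1)))).
  + by apply/(proj2 (eval_phi y (Hv (inr j2)))).
Qed.
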